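(* There is an algorithm which, given a skew-merged permutation of size $n$, computes in $O(n)$ time the type (NE, NW, SW, SE, or central) of each of its elements.
   Context: Permutations are identified with their sets of points $(i,\sigma(i))$ with the usual left/right/above/below relations. A permutation is skew-merged if its points can be partitioned into an increasing and a decreasing subsequence (equivalently, it avoids $3412$ and $2143$). An element of a skew-merged permutation is of type NE if it plays the role of the $3$ in an occurrence of $213$; NW if it plays the $3$ in an occurrence of $312$; SW if it plays the $1$ in an occurrence of $132$; SE if it plays the $1$ in an occurrence of $231$; it is central if it has none of these types. (The four non-central types are pairwise disjoint.) *)

(* Defs.v *)
From mathcomp Require Import all_boot.
Set Implicit Arguments. Unset Strict Implicit. Unset Printing Implicit Defensive.

Definition is_perm (p : seq nat) : Prop := perm_eq p (iota 0 (size p)).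

Definition skew_merged (p : seq nat) : Prop :=
  is_perm p /\
  exists m : bitseq, size m = size p /\
    sorted ltn (mask m p) /\ sorted gtn (mask (map negb m) p).

Definition at_ (p : seq nat) (i : nat) : nat := nth 0 p i.

Definition is_NE (p : seq nat) (j : nat) : Prop :=
  exists a b, a < b /\ b < j /\ at_ p b < at_ p a /\ at_ p a < at_ p j.
Definition is_NW (p : seq nat) (j : nat) : Prop :=
  exists b c, j < b /\ b < c /\ c < size p /\ at_ p b < at_ p c /\ at_ p c < at_ p j.
Definition is_SW (p : seq nat) (j : nat) : Prop :=
  exists b c, j < b /\ b < c /\ c < size p /\ at_ p j < at_ p c /\ at_ p c < at_ p b.
Definition is_SE (p : seq nat) (j : nat) : Prop :=
  exists a b, a < b /\ b < j /\ at_ p j < at_ p a /\ at_ p a < at_ p b.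
Definition is_central (p : seq nat) (j : nat) : Prop :=
  ~ is_NE p j /\ ~ is_NW p j /\ ~ is_SW p j /\ ~ is_SE p j.

Definition correct_code (p : seq nat) (j o : nat) : Prop :=
  [/\ o = 0 <-> is_central p j, o = 1 <-> is_NE p j, o = 2 <-> is_NW p j,
      o = 3 <-> is_SW p j & o = 4 <-> is_SE p j].

(* Computation model: a word RAM.  Registers and memory cells hold     *)
(* costs one unit; expressions are of fixed size in a program, so they *)
(* cost O(1).                                                          *)

Inductive expr : Type :=
| EConst of nat
| EReg of nat
| ELoad of expr
| EAdd of expr & expr
| ESub of expr & expr         (* truncated subtraction *)
| ELt of expr & expr
| EEq of expr & expr.

Inductive stmt : Type :=
| SSkip
| SAssign of nat & expr
| SStore of expr & expr
| SSeq of stmt & stmt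
| SIf of expr & stmt & stmt
| SWhile of expr & stmt.

Record state : Type := State { regs : nat -> nat; heap : nat -> nat }.

Definition chk (W v : nat) : option nat := if v <= W then Some v else None.

Fixpoint eval (W : nat) (s : state) (e : expr) : option nat :=
  match e with
  | EConst c => chk W c
  | EReg r => chk W (regs s r)
  | ELoad a => obind (fun x => chk W (heap s x)) (eval W s a)
  | EAdd e1 e2 => obind (fun x => obind (fun y => chk W (x + y)) (eval W s e2)) (eval W s e1)
  | ESub e1 e2 => obind (fun x => obind (fun y => chk W (x - y)) (eval W s e2)) (eval W s e1)
  | ELt e1 e2 => obind (fun x => obind (fun y => Some (nat_of_bool (x < y))) (eval W s e2)) (eval W s e1)
  | EEq e1 e2 => obind (fun x => obind (fun y => Some (nat_of_bool (x == y))) (eval W s e2)) (eval W s e1)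
  end.

Definition upd (f : nat -> nat) (k v : nat) : nat -> nat :=
  fun x => if x == k then v else f x.

Inductive exec (W : nat) : stmt -> state -> nat -> state -> Prop :=
| ExSkip s : exec W SSkip s 1 s
| ExAssign s r e v : eval W s e = Some v ->
    exec W (SAssign r e) s 1 (State (upd (regs s) r v) (heap s))
| ExStore s e1 e2 a v : eval W s e1 = Some a -> eval W s e2 = Some v ->
    exec W (SStore e1 e2) s 1 (State (regs s) (upd (heap s) a v))
| ExSeq c1 c2 s1 s2 s3 t1 t2 : exec W c1 s1 t1 s2 -> exec W c2 s2 t2 s3 ->
    exec W (SSeq c1 c2) s1 (t1 + t2) s3
| ExIfT e c1 c2 s s' v t : eval W s e = Some v -> v != 0 -> exec W c1 s t s' ->
    exec W (SIf e c1 c2) s t.+1 s'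
| ExIfF e c1 c2 s s' t : eval W s e = Some 0 -> exec W c2 s t s' ->
    exec W (SIf e c1 c2) s t.+1 s'
| ExWhileF e c s : eval W s e = Some 0 -> exec W (SWhile e c) s 1 s
| ExWhileT e c s1 s2 s3 v t1 t2 : eval W s1 e = Some v -> v != 0 ->
    exec W c s1 t1 s2 -> exec W (SWhile e c) s2 t2 s3 ->
    exec W (SWhile e c) s1 (t1 + t2).+1 s3.

(* Input convention: register 0 holds n, memory cells 0..n-1 hold
   p_0..p_{n-1}, everything else is 0.  Output: cell n+j holds the code
   of the type of the element at position j. *)
Definition init_state (p : seq nat) : state :=
  State (fun r => if r == 0 then size p else 0) (fun a => nth 0 p a).

(* Main.v *)
Require Import Defs.
From mathcomp Require Import all_boot zify.
From Stdlib Require Import Classical.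
Set Implicit Arguments. Unset Strict Implicit.

Lemma mask_mem (p : seq nat) (m : bitseq) x :
  x < size p -> nth false m x -> nth 0 p x \in mask m p.
Proof.
elim: p m x => [|z p IH] m x //=; case: m => [|b m] //=; first by rewrite nth_nil.
case: x => [|x] /= Hx Hb; first by rewrite Hb mem_head.
have := IH m x Hx Hb; case: b => //= H; by rewrite in_cons H orbT.
Qed.

Lemma smask (r : rel nat) (tr : transitive r) (p : seq nat) (m : bitseq) x y :
  sorted r (mask m p) -> x < y -> y < size p -> nth false m x -> nth false m y ->
  r (nth 0 p x) (nth 0 p y).
Proof.
elim: p m x y => [|z p IH] m x y //=; case: m => [|b m] /=; first by rewrite nth_nil.
case: y => [|y] //; case: x => [|x] /= Hs Hxy Hy Hb Hm.
- rewrite Hb in Hs; have := order_path_min tr Hs => /allP; apply.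
  exact: mask_mem.
- apply: (IH m) => //; case: b Hs => //= Hs; exact: path_sorted Hs.
Qed.

Definition colP (p : seq nat) (m : bitseq) x y : Prop :=
  if nth false m x then (if nth false m y then is_true (nth 0 p x < nth 0 p y) else True)
  else (if nth false m y then True else is_true (nth 0 p y < nth 0 p x)).

Lemma col p m : size m = size p -> sorted ltn (mask m p) ->
  sorted gtn (mask (map negb m) p) ->
  forall x y, x < y -> y < size p -> colP p m x y.
Proof.
move=> Hsz Hi Hd x y Hxy Hy; rewrite /colP.
case Ex: (nth false m x); case Ey: (nth false m y) => //.
- exact: (smask ltn_trans Hi).
- have trg : transitive gtn by move=> a b c h1 h2; exact: ltn_trans h2 h1.
  have := smask trg Hd Hxy Hy; rewrite /gtn /=; apply;
  rewrite (nth_map false) ?Ex ?Ey //; lia.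
Qed.

Ltac colall p m := idtac.

Section Disj.
Variables (p : seq nat) (m : bitseq).
Hypothesis Hsz : size m = size p.
Hypothesis Hi : sorted ltn (mask m p).
Hypothesis Hd : sorted gtn (mask (map negb m) p).
Let C := col Hsz Hi Hd.


Lemma five x1 x2 x3 x4 x5 : x1 < x2 -> x2 < x3 -> x3 < x4 -> x4 < x5 -> x5 < size p ->
  colP p m x1 x2 /\ colP p m x1 x3 /\ colP p m x1 x4 /\ colP p m x1 x5 /\ colP p m x2 x3 /\
      colP p m x2 x4 /\ colP p m x2 x5 /\ colP p m x3 x4 /\ colP p m x3 x5 /\ colP p m x4 x5.
Proof. move=> *; repeat split; apply: C; lia. Qed.

Lemma LR j : j < size p -> (is_NE p j \/ is_SE p j) -> (is_NW p j \/ is_SW p j) -> False.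
Proof.
move=> Hj HL HR.
have [a [b [h1 [h2 h3]]]] : exists a b, a < b /\ b < j /\
   ((at_ p b < at_ p a /\ at_ p a < at_ p j) \/ (at_ p j < at_ p a /\ at_ p a < at_ p b)).
  by case: HL => [[a [b [? [? [? ?]]]]]|[a [b [? [? [? ?]]]]]]; exists a, b; tauto.
have [b' [c [g1 [g2 [g3 g4]]]]] : exists b c, j < b /\ b < c /\ c < size p /\
   ((at_ p b < at_ p c /\ at_ p c < at_ p j) \/ (at_ p j < at_ p c /\ at_ p c < at_ p b)).
  by case: HR => [[b0 [c [? [? [? [? ?]]]]]]|[b0 [c [? [? [? [? ?]]]]]]]; exists b0, c; tauto.
rewrite /at_ in h3 g4.
have := five h1 h2 g1 g2 g3; rewrite /colP.
case: (nth false m a); case: (nth false m b); case: (nth false m j);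
case: (nth false m b'); case: (nth false m c) => /=; case: h3; case: g4; lia.
Qed.

Lemma LL j : j < size p -> is_NE p j -> is_SE p j -> False.
Proof.
move=> Hj [a [b [h1 [h2 [h3 h4]]]]] [a' [b' [g1 [g2 [g3 g4]]]]].
rewrite /at_ in h3 h4 g3 g4.
move: (C h1 (ltn_trans h2 Hj)) (C (ltn_trans h1 h2) Hj) (C h2 Hj)
  (C g1 (ltn_trans g2 Hj)) (C (ltn_trans g1 g2) Hj) (C g2 Hj); rewrite /colP.
case: (nth false m a); case: (nth false m b); case: (nth false m j);
case: (nth false m a'); case: (nth false m b') => /=; lia.
Qed.

Lemma RR j : j < size p -> is_NW p j -> is_SW p j -> False.
Proof.
move=> Hj [a [b [h1 [h2 [h0 [h3 h4]]]]]] [a' [b' [g1 [g2 [g0 [g3 g4]]]]]].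
rewrite /at_ in h3 h4 g3 g4.
move: (C h1 (ltn_trans h2 h0)) (C (ltn_trans h1 h2) h0) (C h2 h0)
  (C g1 (ltn_trans g2 g0)) (C (ltn_trans g1 g2) g0) (C g2 g0); rewrite /colP.
case: (nth false m a); case: (nth false m b); case: (nth false m j);
case: (nth false m a'); case: (nth false m b') => /=; lia.
Qed.
End Disj.

Arguments chk : simpl never.
Arguments upd f k v x /.

Definition baseE := EAdd (EReg 0) (EReg 0).
Definition topE := ELoad (EAdd baseE (EReg 2)).
Definition popbody := SSeq (SIf (ELt topE (EReg 3)) (SAssign 3 topE) SSkip)
                           (SAssign 2 (ESub (EReg 2) (EConst 1))).
Definition poploop := SWhile (ELt (EReg 4) topE) popbody.

Lemma chkE W v : v <= W -> chk W v = Some v.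
Proof. by rewrite /chk => ->. Qed.

Ltac ev := rewrite /=; repeat (rewrite chkE /=; last lia); try done; try (congr Some; lia).

Section Pass.
Variables (W n : nat).
Hypothesis HW : 4 * n + 4 <= W.

Definition St (s : state) k := heap s (n + n + k).


Lemma popbody_ok s sp : regs s 0 = n -> regs s 2 = sp.+1 -> sp < n ->
  St s sp.+1 <= n -> regs s 3 <= n ->
  exists s1, [/\ exec W popbody s 3 s1, heap s1 = heap s,
    (forall r, r != 2 -> r != 3 -> regs s1 r = regs s r), regs s1 2 = sp
  & regs s1 3 = minn (St s sp.+1) (regs s 3)].
Proof.
move=> H0 H2 Hsp Htop H3; rewrite /St in Htop.
case: (ltnP (heap s (n + n + sp.+1)) (regs s 3)) => Hlt.
- pose s0 := State (upd (regs s) 3 (heap s (n + n + sp.+1))) (heap s).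
  exists (State (upd (regs s0) 2 sp) (heap s0)); split => //.
  + apply: (@ExSeq _ _ _ _ s0 _ 2 1).
    * apply: (@ExIfT _ _ _ _ _ _ 1); first by ev; rewrite H0 H2; ev; rewrite Hlt.
      - by [].
      - rewrite /s0; apply: ExAssign; ev; rewrite H0 H2; ev.
    * apply: ExAssign; ev; rewrite H2; ev.
  + by rewrite /s0 /= => r /negbTE -> /negbTE ->.
- exists (State (upd (regs s) 2 sp) (heap s)); split => //.
  + apply: (@ExSeq _ _ _ _ s _ 2 1).
    * apply: ExIfF; first by ev; rewrite H0 H2; ev; rewrite ltnNge Hlt.
      exact: ExSkip.
    * apply: ExAssign; ev; rewrite H2; lia.
  + by move=> r /= /negbTE ->.
Qed.

Lemma pop_ok sp : forall s x, regs s 0 = n -> regs s 2 = sp -> sp <= n ->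
  regs s 4 = x -> x < n -> regs s 3 <= n -> St s 0 = 0 ->
  (forall k, k < sp -> St s k <= St s k.+1) -> (forall k, k <= sp -> St s k <= n) ->
  exists s' t, [/\ exec W poploop s t s', heap s' = heap s,
    (forall r, r != 2 -> r != 3 -> regs s' r = regs s r),
    regs s' 2 <= sp /\ t <= 4 * (sp - regs s' 2) + 1
  & St s (regs s' 2) <= x /\ (forall k, regs s' 2 < k <= sp -> x < St s k /\ regs s' 3 <= St s k)
    /\ regs s' 3 <= regs s 3 /\ (regs s' 3 = regs s 3 \/ exists k, regs s' 2 < k <= sp /\ regs s' 3 = St s k)].
Proof.
elim: sp => [|sp IH] s x H0 H2 Hsp H4 Hx H3 HS0 Hsort Hval.
- exists s, 1; split => //.
  + apply: ExWhileF; rewrite /topE; ev; rewrite H0 H2 H4; ev.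
    move: HS0; rewrite /St addn0 => ->; ev.
  + by rewrite H2.
  + rewrite H2 HS0; split => //; split; first by move=> k; lia.
    by split => //; left.
have Htop : St s sp.+1 <= n by apply: Hval.
case: (ltnP x (St s sp.+1)) => Hxt; last first.
- exists s, 1; split => //.
  + apply: ExWhileF; rewrite /topE; ev; rewrite H0 H2 H4; ev.
    move: Hxt Htop; rewrite /St => Hxt Htop; ev; by rewrite ltnNge Hxt.
  + by rewrite H2; split; lia.
  + rewrite H2; split => //; split; first by move=> k; lia.
    by split => //; left.
have [s1 [E1 Hh1 Hr1 H21 H31]] := popbody_ok H0 H2 (leq_trans (ltnSn sp) Hsp) Htop H3.
have St1 : forall k, St s1 k = St s k by move=> k; rewrite /St Hh1.
have a1 : regs s1 3 <= n by rewrite H31; lia.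
have a2 : St s1 0 = 0 by rewrite St1.
have a3 : forall k, k < sp -> St s1 k <= St s1 k.+1 by move=> k hk; rewrite !St1; apply: Hsort; lia.
have a4 : forall k, k <= sp -> St s1 k <= n by move=> k hk; rewrite St1; apply: Hval; lia.
have [s' [t' [E' Hh' Hr' [Hsp' Ht'] [P1 [P2 [P3 P4]]]]]] :=
  IH s1 x (etrans (Hr1 0 isT isT) H0) H21 (ltnW Hsp) (etrans (Hr1 4 isT isT) H4) Hx a1 a2 a3 a4.
exists s', (3 + t').+1; split.
- apply: (@ExWhileT _ _ _ _ _ _ 1) => //; last by exact: E'.
  + rewrite /topE; ev; rewrite H0 H2 H4; ev. move: Hxt Htop; rewrite /St => Hxt Htop; ev.
  + exact: E1.
- by rewrite Hh' Hh1.
- move=> r r2 r3; rewrite Hr' // Hr1 //.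
- lia.
- rewrite -St1; split => //; split.
  + move=> k hk; case: (ltnP k sp.+1) => hk2.
    * rewrite -St1; apply: P2; lia.
    * have -> : k = sp.+1 by lia.
      split => //; move: P3; rewrite H31; lia.
  + split; first by move: P3; rewrite H31; lia.
    case: P4 => [->|[k [hk ->]]].
    * rewrite H31; case: (leqP (St s sp.+1) (regs s 3)) => hm.
      -- right; exists sp.+1; split; lia.
      -- by left.
    * right; exists k; rewrite St1; split => //; lia.
Qed.

Section Body.
Variables (dir comp : bool) (code : nat) (h0 : nat -> nat).
Hypothesis Hcode : code <= 4.
Hypothesis Hin : forall a, a < n -> h0 a < n.

Definition sg j := if dir then n.-1 - j else j.
Definition q j := if comp then n.-1 - h0 (sg j) else h0 (sg j).
Definition NEq j := exists a b, a < b /\ b < j /\ q b < q a /\ q a < q j.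

Lemma sg_lt j : j < n -> sg j < n.
Proof. rewrite /sg; case: dir; lia. Qed.
Lemma q_lt j : j < n -> q j < n.
Proof. move=> hj; have := Hin (sg_lt hj); rewrite /q; case: comp; lia. Qed.
Lemma sg_inj j k : j < n -> k < n -> sg j = sg k -> j = k.
Proof. rewrite /sg; case: dir; lia. Qed.

Record Inv (s : state) (i : nat) : Prop := {
  iR0 : regs s 0 = n; iR1 : regs s 1 = i; iLe : i <= n; iSp : regs s 2 <= i;
  iF : regs s 3 <= n;
  iIn : forall a, a < n -> heap s a = h0 a;
  iOut1 : forall j, j < i -> NEq j -> heap s (n + sg j) = code;
  iOut2 : forall j, j < n -> ~ (j < i /\ NEq j) -> heap s (n + sg j) = h0 (n + sg j);
  iS0 : St s 0 = 0;
  iSort : forall k, k < regs s 2 -> St s k <= St s k.+1;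
  iSval : forall k, 0 < k <= regs s 2 -> exists a, a < i /\ St s k = q a;
  iF2 : forall a b, a < b -> b < i -> q b < q a -> regs s 3 <= q a;
  iF3 : regs s 3 < n -> exists a b, a < b /\ b < i /\ q b < q a /\ q a <= regs s 3;
  iO : forall a, a < i -> (exists b, a < b /\ b < i /\ q b < q a) \/
                          (exists k, 0 < k <= regs s 2 /\ St s k = q a) }.

Lemma Inv_sorted s i : Inv s i -> forall k l, k <= l -> l <= regs s 2 -> St s k <= St s l.
Proof.
move=> I k l hkl; elim: l hkl => [|l IH] hkl hl.
- by have -> : k = 0 by lia.
- case: (ltnP k l.+1) => h.
  + apply: leq_trans (IH _ _) (iSort I _) ; lia.
  + by have -> : k = l.+1 by lia.
Qed.

Lemma Inv_val s i : Inv s i -> i <= n -> forall k, k <= regs s 2 -> St s k <= n.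
Proof.
move=> I hi k hk; case: k hk => [|k] hk; first by rewrite (iS0 I).
have [|a [ha ->]] := @iSval s i I k.+1; first lia.
by apply: ltnW; apply: q_lt; lia.
Qed.

Definition addrE := if dir then ESub (ESub (EReg 0) (EConst 1)) (EReg 1) else EReg 1.
Definition valE := if comp then ESub (ESub (EReg 0) (EConst 1)) (ELoad (EReg 5)) else ELoad (EReg 5).
Definition body :=
 SSeq (SAssign 5 addrE) (SSeq (SAssign 4 valE) (SSeq
   (SIf (ELt (EReg 3) (EReg 4)) (SStore (EAdd (EReg 0) (EReg 5)) (EConst code)) SSkip)
   (SSeq poploop (SSeq (SAssign 2 (EAdd (EReg 2) (EConst 1)))
   (SSeq (SStore (EAdd baseE (EReg 2)) (EReg 4)) (SAssign 1 (EAdd (EReg 1) (EConst 1)))))))).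

Lemma body_ok s i : Inv s i -> i < n ->
  exists s' t, [/\ exec W body s t s', Inv s' i.+1 & t + 4 * regs s' 2 <= 12 + 4 * regs s 2].
Proof.
move=> I hi.
have H0 := iR0 I; have H1 := iR1 I; have HF := iF I; have HS := iSp I.
set sp := regs s 2; set f := regs s 3; set a := sg i; set x := q i.
have esp : sp = regs s 2 by []. have ef : f = regs s 3 by []. have ea : a = sg i by []. have ex : x = q i by [].
have ha : a < n by apply: sg_lt.
have hx : x < n by apply: q_lt.
pose s1 := State (upd (regs s) 5 a) (heap s).
have E1 : exec W (SAssign 5 addrE) s 1 s1.
  apply: ExAssign; rewrite /addrE /a /sg; case: dir; ev; rewrite H0 H1; ev.
pose s2 := State (upd (regs s1) 4 x) (heap s1).
have E2 : exec W (SAssign 4 valE) s1 1 s2.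
  apply: ExAssign; rewrite /valE /x /q -/a.
  have hh : heap s a = h0 a by apply: (iIn I).
  have := Hin ha => hb.
  case: comp; ev; rewrite hh; ev.
have R2 : forall r, regs s2 r = if r == 4 then x else if r == 5 then a else regs s r by [].
pose hs3 := fun ad => if (f < x) && (ad == n + a) then code else heap s ad.
have [s3 [E3 R3 Hh3]] : exists s3, [/\ exec W (SIf (ELt (EReg 3) (EReg 4))
       (SStore (EAdd (EReg 0) (EReg 5)) (EConst code)) SSkip) s2 2 s3,
     regs s3 = regs s2 & forall ad, heap s3 ad = hs3 ad].
  case: (ltnP f x) => hfx.
  - exists (State (regs s2) (upd (heap s2) (n + a) code)); split => //.
    + apply: (@ExIfT _ _ _ _ _ _ 1) => //.
      * ev; by rewrite -/f hfx.
      * apply: ExStore; ev; rewrite H0; ev.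
    + by move=> ad; rewrite /hs3 hfx /=.
  - exists s2; split => //.
    + apply: ExIfF; last exact: ExSkip.
      ev; by rewrite -/f ltnNge hfx.
    + by move=> ad; rewrite /hs3 ltnNge hfx.
have Hval := Inv_val I (ltnW hi).
have [s4 [tp [E4 Hh4 Hr4 [Hsp4 Htp] [P1 [P2 [P3 P4]]]]]] :
  exists s' t, [/\ exec W poploop s3 t s', heap s' = heap s3,
    (forall r, r != 2 -> r != 3 -> regs s' r = regs s3 r),
    regs s' 2 <= sp /\ t <= 4 * (sp - regs s' 2) + 1
  & St s3 (regs s' 2) <= x /\ (forall k, regs s' 2 < k <= sp -> x < St s3 k /\ regs s' 3 <= St s3 k)
    /\ regs s' 3 <= regs s3 3 /\ (regs s' 3 = regs s3 3 \/ exists k, regs s' 2 < k <= sp /\ regs s' 3 = St s3 k)].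
  have St3 : forall k, St s3 k = St s k.
    move=> k; rewrite /St Hh3 /hs3; case: (f < x) => //=.
    by have -> : (n + n + k == n + a) = false by apply/eqP; lia.
  apply: (@pop_ok sp s3 x).
  - by rewrite R3 R2.
  - by rewrite R3 R2.
  - lia.
  - by rewrite R3 R2.
  - exact: hx.
  - by rewrite R3 R2.
  - by rewrite St3 (iS0 I).
  - move=> k hk; rewrite !St3; exact: (iSort I hk).
  - move=> k hk; rewrite St3; exact: Hval.
have St3 : forall k, St s3 k = St s k.
  move=> k; rewrite /St Hh3 /hs3; case: (f < x) => //=.
  by have -> : (n + n + k == n + a) = false by apply/eqP; lia.
rewrite St3 in P1.
set sp' := regs s4 2 in Hsp4 Htp P1 P2 P4 *.
have R40 : regs s4 0 = n by rewrite Hr4 // R3 R2.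
have R41 : regs s4 1 = i by rewrite Hr4 // R3 R2.
have R44 : regs s4 4 = x by rewrite Hr4 // R3 R2.
have R43 : regs s3 3 = f by rewrite R3 R2.
rewrite R43 in P3 P4.
have {}P2 : forall k, sp' < k <= sp -> x < St s k /\ regs s4 3 <= St s k.
  by move=> k hk; rewrite -!St3; exact: P2 k hk.
have {}P4 : regs s4 3 = f \/ exists k, sp' < k <= sp /\ regs s4 3 = St s k.
  by case: P4 => [->|[k [hk ->]]]; [left|right; exists k; rewrite St3].
pose s5 := State (upd (regs s4) 2 sp'.+1) (heap s4).
have E5 : exec W (SAssign 2 (EAdd (EReg 2) (EConst 1))) s4 1 s5.
  apply: ExAssign; ev; rewrite -/sp'; ev.
pose s6 := State (regs s5) (upd (heap s5) (n + n + sp'.+1) x).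
have E6 : exec W (SStore (EAdd baseE (EReg 2)) (EReg 4)) s5 1 s6.
  apply: ExStore; ev; rewrite R40 ?R44; ev.
pose s7 := State (upd (regs s6) 1 i.+1) (heap s6).
have E7 : exec W (SAssign 1 (EAdd (EReg 1) (EConst 1))) s6 1 s7.
  apply: ExAssign; ev; rewrite R41; ev.
have R7 : forall r, regs s7 r = if r == 1 then i.+1 else if r == 2 then sp'.+1 else regs s4 r by [].
have H7 : forall ad, heap s7 ad = if ad == n + n + sp'.+1 then x else hs3 ad.
  by move=> ad; rewrite /s7 /s6 /s5 /= Hh4 Hh3.
have St7 : forall k, St s7 k = if k == sp'.+1 then x else St s k.
  move=> k; rewrite /St H7 eqn_add2l; case: (k == sp'.+1) => //.
  rewrite /hs3; case: (f < x) => //=.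
  by have -> : (n + n + k == n + a) = false by apply/eqP; lia.
have hnot : forall j, j < n -> (n + sg j == n + n + sp'.+1) = false.
  by move=> j hj; apply/eqP; have := sg_lt hj; lia.
exists s7, (1 + (1 + (2 + (tp + (1 + (1 + 1)))))); split.
- apply: ExSeq E1 _; apply: ExSeq E2 _; apply: ExSeq E3 _; apply: ExSeq E4 _;
  apply: ExSeq E5 _; exact: ExSeq E6 E7.
- have hsp' : sp' <= sp by [].
  have R72 : regs s7 2 = sp'.+1 by [].
  have R73 : regs s7 3 = regs s4 3 by [].
  have HF2 := iF2 I; have HF3 := iF3 I; have HO := iO I; have HSv := iSval I.
  have HSo := Inv_sorted I.
  constructor.
  + by rewrite R7.
  + by rewrite R7.
  + lia.
  + rewrite R7 /=; lia.
  + rewrite R7 /=; lia.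
  + move=> a0 ha0; rewrite H7.
    have -> : (a0 == n + n + sp'.+1) = false by apply/eqP; lia.
    rewrite /hs3.
    have -> : (a0 == n + a) = false by apply/eqP; lia.
    by rewrite andbF (iIn I).
  + move=> j hj hne; rewrite H7 hnot; last lia.
    rewrite /hs3; case: (ltnP j i) => hji.
    * have -> : (n + sg j == n + a) = false.
        apply/eqP => e; have := sg_inj (j:=j) (k:=i); rewrite /a in e; lia.
      by rewrite andbF (iOut1 I).
    * have ej : j = i by lia.
      subst j; rewrite -/a eqxx andbT.
      case: hne => [a0 [b0 [h1 [h2 [h3 h4]]]]].
      have := HF2 a0 b0 h1 h2 h3; rewrite -/f => h5.
      have -> : f < x by rewrite /x; lia.
      by [].
  + move=> j hj hne; rewrite H7 hnot // /hs3.
    case: (eqVneq j i) => [ej|nji].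
    * subst j; rewrite -/a eqxx andbT.
      case: (ltnP f x) => hfx /=.
      -- exfalso; apply: hne; split => //.
         have [|a0 [b0 [h1 [h2 [h3 h4]]]]] := HF3; first lia.
         by exists a0, b0; rewrite -/x; repeat split => //; lia.
      -- apply: (iOut2 I) => //; lia.
    * have -> : (n + sg j == n + a) = false.
        apply/eqP => e; have := sg_inj hj hi; rewrite /a in e; move/eqP: nji; lia.
      rewrite andbF; apply: (iOut2 I) => // - [h1 h2]; apply: hne; split => //; lia.
  + by rewrite St7 (iS0 I).
  + rewrite R72 => k hk; rewrite !St7.
    have -> : (k == sp'.+1) = false by apply/eqP; lia.
    case: (eqVneq k.+1 sp'.+1) => [e|ne].
    * have -> : k = sp' by lia. exact: P1.
    * apply: (iSort I); move/eqP: ne; lia.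
  + rewrite R72 => k hk; rewrite St7.
    case: (eqVneq k sp'.+1) => [e|ne].
    * by exists i.
    * have [|a0 [ha0 ->]] := HSv k; first by move/eqP: ne; lia.
      by exists a0; split => //; lia.
  + rewrite R73 => a0 b0 h1 h2 h3.
    case: (ltnP b0 i) => hb.
    * have := HF2 a0 b0 h1 hb h3; lia.
    * have eb : b0 = i by lia.
      subst b0; rewrite -/x in h3.
      case: (HO a0 h1) => [[b1 [g1 [g2 g3]]]|[k [hk hSk]]].
      -- have := HF2 a0 b1 g1 g2 g3; lia.
      -- case: (leqP k sp') => hk2.
         ++ have := HSo k sp' hk2 hsp'; lia.
         ++ have hh : sp' < k <= sp by move: hk2 hk; rewrite esp; clear; lia.
            have [_ h] := P2 k hh; rewrite ?St3 in h; lia.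
  + rewrite R73 => hf.
    case: P4 => [ef0|[k [hk ef0]]].
    * have [|a0 [b0 [h1 [h2 [h3 h4]]]]] := HF3; first lia.
      exists a0, b0; repeat split => //; lia.
    * have [|a0 [ha0 hSk]] := HSv k; first lia.
      have [hxk _] := P2 k hk.
      exists a0, i; rewrite -/x; repeat split => //; lia.
  + rewrite R72 => a0 ha0.
    case: (eqVneq a0 i) => [e|ne].
    * subst a0; right; exists sp'.+1; rewrite St7 eqxx; split => //; lia.
    * case: (HO a0 (ltac:(move/eqP: ne; lia))) => [[b1 [g1 [g2 g3]]]|[k [hk hSk]]].
      -- left; exists b1; repeat split => //; lia.
      -- case: (leqP k sp') => hk2.
         ++ right; exists k; rewrite St7.
            have -> : (k == sp'.+1) = false by apply/eqP; lia.
            split => //; lia.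
         ++ left; exists i; have [hxk _] := P2 k (ltac:(lia)).
            repeat split => //; first (move/eqP: ne; lia); rewrite -/x; lia.
- rewrite R7 /=; lia.
Qed.

Definition loop := SWhile (ELt (EReg 1) (EReg 0)) body.

Lemma loop_ok k : forall s i, n - i = k -> Inv s i ->
  exists s' t, [/\ exec W loop s t s', Inv s' n & t <= 13 * (n - i) + 4 * regs s 2 + 1].
Proof.
elim: k => [|k IH] s i hk I.
- have ei : i = n by have := iLe I; lia.
  subst i; exists s, 1; split => //; last by lia.
  apply: ExWhileF; ev; rewrite (iR0 I) (iR1 I); ev; by rewrite ltnn.
- have hi : i < n by lia.
  have [s1 [tb [Eb I1 Htb]]] := body_ok I hi.
  have [s' [tl [El I' Htl]]] := IH s1 i.+1 (ltac:(lia)) I1.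
  exists s', (tb + tl).+1; split => //.
  + apply: (@ExWhileT _ _ _ _ _ _ 1) => //; last exact: El; last exact: Eb.
    ev; rewrite (iR0 I) (iR1 I); ev; by rewrite hi.
  + lia.
Qed.

Definition pass := SSeq (SAssign 1 (EConst 0)) (SSeq (SAssign 2 (EConst 0))
  (SSeq (SStore baseE (EConst 0)) (SSeq (SAssign 3 (EReg 0)) loop))).

Lemma pass_ok s : regs s 0 = n -> heap s = h0 ->
  exists s' t, [/\ exec W pass s t s', Inv s' n & t <= 13 * n + 5].
Proof.
move=> H0 Hh.
pose s1 := State (upd (regs s) 1 0) (heap s).
pose s2 := State (upd (regs s1) 2 0) (heap s1).
pose s3 := State (regs s2) (upd (heap s2) (n + n) 0).
pose s4 := State (upd (regs s3) 3 n) (heap s3).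
have E1 : exec W (SAssign 1 (EConst 0)) s 1 s1 by apply: ExAssign; ev.
have E2 : exec W (SAssign 2 (EConst 0)) s1 1 s2 by apply: ExAssign; ev.
have E3 : exec W (SStore baseE (EConst 0)) s2 1 s3 by apply: ExStore; ev; rewrite H0; ev.
have E4 : exec W (SAssign 3 (EReg 0)) s3 1 s4 by apply: ExAssign; ev; rewrite H0; ev.
have Hh4 : forall ad, heap s4 ad = if ad == n + n then 0 else h0 ad by move=> ad; rewrite /= Hh.
have I4 : Inv s4 0.
  constructor => //=; rewrite ?Hh.
  - move=> a ha; have -> : (a == n + n) = false by apply/eqP; lia. done.
  - move=> j hj _; have -> : (n + sg j == n + n) = false.
      by apply/eqP; have := sg_lt hj; lia.
    done.
  - by rewrite addn0 eqxx.
  - lia.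
  - lia.
have [s' [tl [El I' Htl]]] := loop_ok (erefl (n - 0)) I4.
exists s', (1 + (1 + (1 + (1 + tl)))); split => //.
- apply: ExSeq E1 _; apply: ExSeq E2 _; apply: ExSeq E3 _; exact: ExSeq E4 El.
- move: Htl; rewrite /= subn0; lia.
Qed.
End Body.
End Pass.

Lemma pass_sum W n dir comp code h0 s : 4 * n + 4 <= W -> code <= 4 ->
  (forall a, a < n -> h0 a < n) -> regs s 0 = n -> heap s = h0 ->
  exists s' t, [/\ exec W (pass dir comp code) s t s', t <= 13 * n + 5,
    regs s' 0 = n, (forall a, a < n -> heap s' a = h0 a)
  & forall j, j < n -> (NEq n dir comp h0 j -> heap s' (n + sg n dir j) = code) /\
       (~ NEq n dir comp h0 j -> heap s' (n + sg n dir j) = h0 (n + sg n dir j))].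
Proof.
move=> HW Hc Hin H0 Hh.
have [s' [t [E I T]]] := pass_ok HW dir comp Hc Hin H0 Hh.
exists s', t; split => //.
- exact: iR0 I.
- exact: iIn I.
- move=> j hj; split; first exact: (iOut1 I hj).
  move=> hn; apply: (iOut2 I) => // - [_ ]; exact: hn.
Qed.


Lemma NEq_ext n dir comp h h' j : (forall a, a < n -> h a = h' a) -> j < n ->
  NEq n dir comp h j <-> NEq n dir comp h' j.
Proof.
move=> E hj.
have Q : forall i, i < n -> q n dir comp h i = q n dir comp h' i.
  move=> i hi; have hs : sg n dir i < n by rewrite /sg; case: dir; lia.
  by rewrite /q E.
rewrite /NEq; split => -[a [b [h1 [h2 [h3 h4]]]]]; exists a, b.
all: have qa := Q a (ltac:(lia)); have qb := Q b (ltac:(lia)); have qj := Q j hj; lia.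
Qed.

Section Eqv.
Variable p : seq nat.
Let n := size p.
Hypothesis Hp : forall a, a < n -> nth 0 p a < n.
Let h := fun a => nth 0 p a.

Lemma E_NE j : NEq n false false h j <-> is_NE p j.
Proof. by []. Qed.

Lemma E_SE j : j < n -> NEq n false true h j <-> is_SE p j.
Proof.
move=> hj; rewrite /NEq /q /sg /h /is_SE /at_ /=.
split => -[a [b [h1 [h2 [h3 h4]]]]]; exists a, b;
  have := Hp (ltac:(lia) : a < n); have := Hp (ltac:(lia) : b < n); have := Hp hj; lia.
Qed.

Lemma E_NW j : j < n -> NEq n true false h (n.-1 - j) <-> is_NW p j.
Proof.
move=> hj; rewrite /NEq /q /sg /h /is_NW /at_ /=.
have e : n.-1 - (n.-1 - j) = j by lia.
split.
- move=> [a [b [h1 [h2 [h3 h4]]]]]; exists (n.-1 - b), (n.-1 - a).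
  rewrite e in h4; lia.
- move=> [b [c [h1 [h2 [h0 [h3 h4]]]]]]; exists (n.-1 - c), (n.-1 - b).
  have eb : n.-1 - (n.-1 - b) = b by lia.
  have ec : n.-1 - (n.-1 - c) = c by lia.
  rewrite e eb ec; lia.
Qed.

Lemma E_SW j : j < n -> NEq n true true h (n.-1 - j) <-> is_SW p j.
Proof.
move=> hj; rewrite /NEq /q /sg /h /is_SW /at_ /=.
have e : n.-1 - (n.-1 - j) = j by lia.
split.
- move=> [a [b [h1 [h2 [h3 h4]]]]]; exists (n.-1 - b), (n.-1 - a).
  rewrite e in h4.
  have := Hp (ltac:(lia) : n.-1 - a < n); have := Hp (ltac:(lia) : n.-1 - b < n); have := Hp hj.
  lia.
- move=> [b [c [h1 [h2 [h0 [h3 h4]]]]]]; exists (n.-1 - c), (n.-1 - b).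
  have eb : n.-1 - (n.-1 - b) = b by lia.
  have ec : n.-1 - (n.-1 - c) = c by lia.
  rewrite e eb ec.
  have := Hp (ltac:(lia) : c < n); have := Hp (ltac:(lia) : b < n); have := Hp hj.
  lia.
Qed.
End Eqv.

Definition prog := SSeq (pass false false 1) (SSeq (pass true false 2)
  (SSeq (pass true true 3) (pass false true 4))).

Theorem lemma2 :
  exists (P : stmt) (C K : nat),
    forall p : seq nat, skew_merged p ->
      exists (s' : state) (t : nat),
        [/\ exec ((size p).+2 ^ K) P (init_state p) t s',
            t <= C * (size p).+1
          & forall j, j < size p -> correct_code p j (heap s' (size p + j))].
Proof.
exists prog, 60, 2 => p [Hperm [m [Hsz [Hi Hd]]]].
set n := size p; set W := n.+2 ^ 2.
have HW : 4 * n + 4 <= W by rewrite /W expnS expn1; nia.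
have Hp : forall a, a < n -> nth 0 p a < n.
  move=> a ha; have : nth 0 p a \in iota 0 n by rewrite -(perm_mem Hperm) mem_nth.
  by rewrite mem_iota.
set h := fun a => nth 0 p a.
have R0 : regs (init_state p) 0 = n by [].
have [s1 [t1 [E1 T1 R1 I1 O1]]] := pass_sum false false HW (isT : 1 <= 4) Hp R0 (erefl).
have Hp1 : forall a, a < n -> heap s1 a < n by move=> a ha; rewrite I1 //; exact: Hp.
have [s2 [t2 [E2 T2 R2 I2 O2]]] := pass_sum true false HW (isT : 2 <= 4) Hp1 R1 (erefl).
have Hp2 : forall a, a < n -> heap s2 a < n by move=> a ha; rewrite I2 //; exact: Hp1.
have [s3 [t3 [E3 T3 R3 I3 O3]]] := pass_sum true true HW (isT : 3 <= 4) Hp2 R2 (erefl).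
have Hp3 : forall a, a < n -> heap s3 a < n by move=> a ha; rewrite I3 //; exact: Hp2.
have [s4 [t4 [E4 T4 R4 I4 O4]]] := pass_sum false true HW (isT : 4 <= 4) Hp3 R3 (erefl).
exists s4, (t1 + (t2 + (t3 + t4))); split.
- apply: ExSeq E1 _; apply: ExSeq E2 _; exact: ExSeq E3 E4.
- lia.
move=> j hj.
have e1 : forall a, a < n -> heap s1 a = h a by [].
have e2 : forall a, a < n -> heap s2 a = h a by move=> a ha; rewrite I2 // I1.
have e3 : forall a, a < n -> heap s3 a = h a by move=> a ha; rewrite I3 // e2.
have hnj : n.-1 - j < n by lia.
have sgt : sg n true (n.-1 - j) = j by rewrite /sg; lia.
have [O4a O4b] := O4 j hj; have [O3a O3b] := O3 _ hnj; have [O2a O2b] := O2 _ hnj;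
have [O1a O1b] := O1 j hj.
rewrite sgt in O3a O3b O2a O2b.
rewrite /sg in O4a O4b O1a O1b.
rewrite (NEq_ext _ _ e3 hj) (E_SE Hp hj) in O4a O4b.
rewrite (NEq_ext _ _ e2 hnj) (E_SW Hp hj) in O3a O3b.
rewrite (NEq_ext _ _ e1 hnj) (E_NW hj) in O2a O2b.
have h0 : nth 0 p (n + j) = 0 by rewrite nth_default //; lia.
rewrite h0 in O1b.
have dLR := LR Hsz Hi Hd hj; have dLL := LL Hsz Hi Hd hj; have dRR := RR Hsz Hi Hd hj.
rewrite /correct_code /is_central.
case: (classic (is_SE p j)) => [SE|nSE].
- rewrite (O4a SE); split; split => H; (try discriminate); (try done); tauto.
rewrite (O4b nSE).
case: (classic (is_SW p j)) => [SW|nSW].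
- rewrite (O3a SW); split; split => H; (try discriminate); (try done); tauto.
rewrite (O3b nSW).
case: (classic (is_NW p j)) => [NW|nNW].
- rewrite (O2a NW); split; split => H; (try discriminate); (try done); tauto.
rewrite (O2b nNW).
case: (classic (is_NE p j)) => [NE|nNE].
- rewrite (O1a NE); split; split => H; (try discriminate); (try done); tauto.
rewrite (O1b nNE); split; split => H; (try discriminate); (try done); tauto.
Qed.
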